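(* Let $n,k\geq 1$ be integers and let $A_1,\dots,A_k,B_1,\dots,B_k\in\mathbb{R}$. For $\alpha\in\mathbb{C}$ put $a_i=A_i+B_i\alpha$ ($i=1,\dots,k$) and $$O_\alpha(z)=z^n\,\frac{a_k+a_{k-1}z+\dots+a_1 z^{k-1}+z^k}{1+a_1 z+\dots+a_{k-1}z^{k-1}+a_k z^k},$$ considered for those $\alpha$ with $a_k\neq 0$ and $1+a_1+\dots+a_k\neq 0$; for such $\alpha$, $z=1$ is a fixed point of $O_\alpha$. Define $$A=n+k+\sum_{j=1}^k(n+k-2j)A_j,\quad B=\sum_{j=1}^k(n+k-2j)B_j,\quad A'=1+\sum_{j=1}^kA_j,\quad B'=\sum_{j=1}^kB_j,$$ and, when $B^2-B'^2\neq0$, $c=(AB-A'B')/(B^2-B'^2)$ and $r=(A'B-AB')/(B^2-B'^2)$. Then: \begin{enumerate} \item If $B^2-B'^2\neq 0$: (i) $z=1$ is indifferent on the circle $C:\ |\alpha+c|=|r|$; (ii) $z=1$ is attracting inside $C$ if $B^2-B'^2>0$ and outside $C$ if $B^2-B'^2<0$; (iii) $z=1$ is repelling outside $C$ if $B^2-B'^2>0$ and inside $C$ if $B^2-B'^2<0$. \item If $B^2-B'^2=0$: (a) if $B=B'\neq0$: $z=1$ is indifferent if $A=A'$; $z=1$ is attracting if either $\mathrm{Re}(\alpha)<-\frac{A+A'}{2B}$ and $B(A-A')>0$, or $\mathrm{Re}(\alpha)>-\frac{A+A'}{2B}$ and $B(A-A')<0$; $z=1$ is repelling otherwise. (b) if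 $B=-B'\neq0$: $z=1$ is indifferent if $A=-A'$; $z=1$ is attracting if either $\mathrm{Re}(\alpha)<\frac{A'-A}{2B}$ and $B(A+A')>0$, or $\mathrm{Re}(\alpha)>\frac{A'-A}{2B}$ and $B(A+A')<0$; $z=1$ is repelling otherwise. (c) if $B=B'=0$: $z=1$ is indifferent if $|A|=|A'|$, attracting if $|A|<|A'|$, and repelling if $|A|>|A'|$. \end{enumerate} Moreover, if $\alpha=-A/B$, the fixed point $z=1$ is superattracting.
   Context: For a fixed point $z_0$ of a rational map $R$ with multiplier $\lambda=R'(z_0)$, $z_0$ is attracting if $|\lambda|<1$, superattracting if $\lambda=0$, repelling if $|\lambda|>1$, and indifferent if $|\lambda|=1$. *)

(* Defs.v *)
From Stdlib Require Import Reals.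
From Coquelicot Require Import Coquelicot.
Open Scope R_scope.

Definition is_multiplier (f : C -> C) (z0 : C) (l : C) : Prop :=
  is_derive (K := C_AbsRing) (V := C_NormedModule) f z0 l.

Definition fixed_point (f : C -> C) (z0 : C) : Prop := f z0 = z0.

Definition attracting (f : C -> C) (z0 : C) : Prop :=
  fixed_point f z0 /\ exists l, is_multiplier f z0 l /\ Cmod l < 1.
Definition superattracting (f : C -> C) (z0 : C) : Prop :=
  fixed_point f z0 /\ is_multiplier f z0 (RtoC 0).
Definition repelling (f : C -> C) (z0 : C) : Prop :=
  fixed_point f z0 /\ exists l, is_multiplier f z0 l /\ Cmod l > 1.
Definition indifferent (f : C -> C) (z0 : C) : Prop :=
  fixed_point f z0 /\ exists l, is_multiplier f z0 l /\ Cmod l = 1.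

Definition cpow (z : C) (m : nat) : C := pow_n (K := C_Ring) z m.

(* a_i = A_i + B_i alpha  (indices i = 1..k are used) *)
Definition acoef (An Bn : nat -> R) (alpha : C) (i : nat) : C :=
  Cplus (RtoC (An i)) (Cmult (RtoC (Bn i)) alpha).

Definition Onum (k : nat) (An Bn : nat -> R) (alpha z : C) : C :=
  Cplus (cpow z k)
    (sum_n_m (G := C_AbelianMonoid)
       (fun j => Cmult (acoef An Bn alpha j) (cpow z (k - j))) 1 k).

Definition Oden (k : nat) (An Bn : nat -> R) (alpha z : C) : C :=
  Cplus (RtoC 1)
    (sum_n_m (G := C_AbelianMonoid)
       (fun j => Cmult (acoef An Bn alpha j) (cpow z j)) 1 k).

Definition Omap (n k : nat) (An Bn : nat -> R) (alpha : C) (z : C) : C :=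
  Cmult (cpow z n) (Cdiv (Onum k An Bn alpha z) (Oden k An Bn alpha z)).

Definition admissible (k : nat) (An Bn : nat -> R) (alpha : C) : Prop :=
  acoef An Bn alpha k <> RtoC 0 /\
  Cplus (RtoC 1) (sum_n_m (G := C_AbelianMonoid) (fun j => acoef An Bn alpha j) 1 k)
    <> RtoC 0.

Definition Acst (n k : nat) (An : nat -> R) : R :=
  INR n + INR k +
  sum_n_m (G := R_AbelianMonoid) (fun j => (INR n + INR k - 2 * INR j) * An j) 1 k.
Definition Bcst (n k : nat) (Bn : nat -> R) : R :=
  sum_n_m (G := R_AbelianMonoid) (fun j => (INR n + INR k - 2 * INR j) * Bn j) 1 k.
Definition A'cst (k : nat) (An : nat -> R) : R :=
  1 + sum_n_m (G := R_AbelianMonoid) An 1 k.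
Definition B'cst (k : nat) (Bn : nat -> R) : R :=
  sum_n_m (G := R_AbelianMonoid) Bn 1 k.

(* Main.v *)
From Stdlib Require Import Reals Lra Lia.
From Coquelicot Require Import Coquelicot.
Require Import Defs.
Open Scope R_scope.

Lemma Cderive_inv (w : C) : w <> RtoC 0 ->
  is_derive (K := C_AbsRing) (V := C_NormedModule) (fun z => Cinv z) w
    (Copp (Cinv (Cmult w w))).
Proof.
  intros Hw.
  split; [apply is_linear_scal_l|].
  intros x Hx. apply (is_filter_lim_locally_unique (K:=C_AbsRing) (V:=AbsRing_NormedModule C_AbsRing)) in Hx. subst x.
  intros eps. apply (locally_norm_le_locally (K:=C_AbsRing) (V:=AbsRing_NormedModule C_AbsRing)).
  assert (Hmw : 0 < Cmod w) by (apply Cmod_gt_0; auto).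
  assert (Hd : 0 < Rmin (Cmod w / 2) (eps * Cmod w ^ 3 / 2)).
  { apply Rmin_glb_lt; [lra|]. pose proof (cond_pos eps). apply Rdiv_lt_0_compat; [|lra].
    apply Rmult_lt_0_compat; [lra| apply pow_lt; lra]. }
  exists (mkposreal _ Hd). intros y Hy.
  unfold ball_norm in Hy. simpl in Hy. change (Cmod (Cminus y w) < Rmin (Cmod w / 2) (eps * Cmod w ^ 3 / 2)) in Hy.
  change (Cmod (Cminus (Cminus (Cinv y) (Cinv w)) (Cmult (Cminus y w) (Copp (Cinv (Cmult w w))))) <= eps * Cmod (Cminus y w)).
  set (m := Cmod (Cminus y w)) in *.
  assert (Hy1 : m < Cmod w / 2) by (eapply Rlt_le_trans; [apply Hy| apply Rmin_l]).
  assert (Hy2 : m < eps * Cmod w ^ 3 / 2) by (eapply Rlt_le_trans; [apply Hy| apply Rmin_r]).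
  assert (Hyw : Cmod w <= Cmod y + m).
  { replace w with (Cplus y (Copp (Cminus y w))) at 1 by ring.
    unfold m. rewrite <- (Cmod_opp (Cminus y w)). apply Cmod_triangle. }
  assert (Hmy : 0 < Cmod y) by lra.
  assert (Hy0 : y <> RtoC 0) by (apply Cmod_gt_0; auto).
  replace (Cminus (Cminus (Cinv y) (Cinv w)) (Cmult (Cminus y w) (Copp (Cinv (Cmult w w)))))
    with (Cmult (Cmult (Cminus y w) (Cminus y w)) (Cinv (Cmult y (Cmult w w)))) by (field; auto).
  rewrite (Cmod_mult (Cmult (Cminus y w) (Cminus y w))), (Cmod_mult (Cminus y w)), (Cmod_inv (Cmult y (Cmult w w))), (Cmod_mult y), (Cmod_mult w).
  2: { apply Cmod_gt_0. rewrite !Cmod_mult. apply Rmult_lt_0_compat; [lra| apply Rmult_lt_0_compat; lra]. }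
  fold m.
  assert (0 <= m) by apply Cmod_ge_0.
  pose proof (cond_pos eps).
  apply (Rmult_le_reg_r (Cmod y * (Cmod w * Cmod w))). apply Rmult_lt_0_compat; [lra| apply Rmult_lt_0_compat; lra].
  rewrite Rmult_assoc, Rinv_l by (apply Rgt_not_eq, Rmult_lt_0_compat; [lra| apply Rmult_lt_0_compat; lra]).
  simpl in Hy2.
  set (W := Cmod w) in *. set (Y := Cmod y) in *.
  assert (HY : W / 2 <= Y) by lra.
  assert (h1 : m * m <= m * (eps * (W * (W * (W * 1))) / 2)) by (apply Rmult_le_compat_l; lra).
  assert (h2 : eps * (W * (W * (W * 1))) / 2 <= eps * (Y * (W * W))).
  { assert (0 <= eps * (W*W)) by (apply Rmult_le_pos; nra). nra. }
  nra.
Qed.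
Require Import Defs.

Lemma sum1_0 {G : AbelianMonoid} (a : nat -> G) : sum_n_m a 1 0 = zero.
Proof. apply sum_n_m_zero. lia. Qed.
Lemma sum1_S {G : AbelianMonoid} (a : nat -> G) k :
  sum_n_m a 1 (S k) = plus (sum_n_m a 1 k) (a (S k)).
Proof. apply sum_n_Sm. lia. Qed.

Lemma is_derive_eqC (f : C -> C) x l l' :
  is_derive (K := C_AbsRing) (V := C_NormedModule) f x l -> l = l' ->
  is_derive (K := C_AbsRing) (V := C_NormedModule) f x l'.
Proof. intros H ->; exact H. Qed.

Lemma Cderive_sum (f : nat -> C -> C) (d : nat -> C) x k :
  (forall j, (1 <= j <= k)%nat -> is_derive (K := C_AbsRing) (V := C_NormedModule) (f j) x (d j)) ->
  is_derive (K := C_AbsRing) (V := C_NormedModule)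
    (fun z => sum_n_m (G := C_AbelianMonoid) (fun j => f j z) 1 k) x
    (sum_n_m (G := C_AbelianMonoid) d 1 k).
Proof.
  induction k as [|k IH]; intros H.
  - eapply is_derive_ext. { intros t. symmetry. apply sum1_0. }
    rewrite sum1_0. apply (is_derive_const (K:=C_AbsRing) (V:=C_NormedModule)).
  - eapply is_derive_ext. { intros t. symmetry. apply sum1_S. }
    rewrite sum1_S. apply (is_derive_plus (K:=C_AbsRing) (V:=C_NormedModule)).
    + apply IH. intros j Hj. apply H. lia.
    + apply H. lia.
Qed.

Lemma derC_to_abs (f:C->C) x l : @is_derive C_AbsRing C_NormedModule f x l -> @is_derive C_AbsRing (AbsRing_NormedModule C_AbsRing) f x l.
Proof.
intros [H1 H2]. split. destruct H1 as [a b [M [HM HH]]]. constructor; auto. exists M. split; auto.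
intros x0 Hx eps. apply (H2 x0 Hx eps). Qed.
Lemma derC_of_abs (f:C->C) x l : @is_derive C_AbsRing (AbsRing_NormedModule C_AbsRing) f x l -> @is_derive C_AbsRing C_NormedModule f x l.
Proof.
intros [H1 H2]. split. destruct H1 as [a b [M [HM HH]]]. constructor; auto. exists M. split; auto.
intros x0 Hx eps. apply (H2 x0 Hx eps). Qed.

Lemma Cderive_mult (f g : C -> C) x df dg :
  is_derive (K := C_AbsRing) (V := C_NormedModule) f x df ->
  is_derive (K := C_AbsRing) (V := C_NormedModule) g x dg ->
  is_derive (K := C_AbsRing) (V := C_NormedModule) (fun z => Cmult (f z) (g z)) x
    (Cplus (Cmult df (g x)) (Cmult (f x) dg)).
Proof.
  intros Hf Hg.
  apply derC_to_abs in Hf. apply derC_to_abs in Hg. apply derC_of_abs.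
  apply (is_derive_mult (K := C_AbsRing) f g x df dg Hf Hg).
  intros; apply Cmult_comm.
Qed.

Lemma cpow_S z m : cpow z (S m) = Cmult z (cpow z m).
Proof. reflexivity. Qed.
Lemma cpow_1 m : cpow (RtoC 1) m = RtoC 1.
Proof. induction m; [reflexivity|]. rewrite cpow_S, IHm. apply Cmult_1_l. Qed.

Lemma Cderive_pow x m :
  is_derive (K := C_AbsRing) (V := C_NormedModule) (fun z => cpow z m) x
    (Cmult (RtoC (INR m)) (cpow x (pred m))).
Proof.
  induction m as [|m IH].
  - eapply is_derive_eqC. apply (is_derive_ext (K := C_AbsRing) (V := C_NormedModule) (fun _ => RtoC 1)). reflexivity. apply (is_derive_const (K := C_AbsRing) (V := C_NormedModule)).
    simpl. apply injective_projections; simpl; ring.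
  - eapply is_derive_eqC. eapply is_derive_ext. { intros t. symmetry. apply cpow_S. }
    apply Cderive_mult. apply derC_of_abs, (is_derive_id (K := C_AbsRing)). apply IH.
    destruct m as [|m].
    + simpl. apply injective_projections; simpl; ring.
    + change (pred (S (S m))) with (S m). rewrite cpow_S. rewrite !S_INR.
      change (@one C_AbsRing) with (RtoC 1). rewrite !RtoC_plus. simpl pred. match goal with |- ?a = ?b => change (@eq C a b) end. ring.
Qed.

Lemma Cderive_plus (f g : C -> C) x df dg :
  is_derive (K := C_AbsRing) (V := C_NormedModule) f x df ->
  is_derive (K := C_AbsRing) (V := C_NormedModule) g x dg ->
  is_derive (K := C_AbsRing) (V := C_NormedModule) (fun z => Cplus (f z) (g z)) x (Cplus df dg).
Proof. intros Hf Hg. exact (is_derive_plus (K:=C_AbsRing) (V:=C_NormedModule) f g x df dg Hf Hg). Qed.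

Lemma Cderive_const (a : C) x :
  is_derive (K := C_AbsRing) (V := C_NormedModule) (fun _ => a) x (RtoC 0).
Proof. exact (is_derive_const (K:=C_AbsRing) (V:=C_NormedModule) a x). Qed.

Ltac Cring := match goal with |- ?a = ?b => change (@eq C a b) end; ring.

Lemma dnum k An Bn alpha :
  is_derive (K := C_AbsRing) (V := C_NormedModule) (Onum k An Bn alpha) (RtoC 1)
    (Cplus (RtoC (INR k)) (sum_n_m (G := C_AbelianMonoid)
       (fun j => Cmult (acoef An Bn alpha j) (RtoC (INR (k - j)))) 1 k)).
Proof.
  unfold Onum. eapply is_derive_eqC.
  apply Cderive_plus. apply Cderive_pow.
  apply Cderive_sum with (d := fun j => Cplus (Cmult (RtoC 0) (cpow (RtoC 1) (k-j)))
     (Cmult (acoef An Bn alpha j) (Cmult (RtoC (INR (k-j))) (cpow (RtoC 1) (pred (k-j)))))).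
  intros j _. apply Cderive_mult. apply Cderive_const. apply Cderive_pow.
  rewrite cpow_1. f_equal. apply Cmult_1_r.
  apply sum_n_m_ext. intros j. rewrite !cpow_1. Cring.
Qed.

Lemma dden k An Bn alpha :
  is_derive (K := C_AbsRing) (V := C_NormedModule) (Oden k An Bn alpha) (RtoC 1)
    (sum_n_m (G := C_AbelianMonoid)
       (fun j => Cmult (acoef An Bn alpha j) (RtoC (INR j))) 1 k).
Proof.
  unfold Oden. eapply is_derive_eqC.
  apply Cderive_plus. apply Cderive_const.
  apply Cderive_sum with (d := fun j => Cplus (Cmult (RtoC 0) (cpow (RtoC 1) j))
     (Cmult (acoef An Bn alpha j) (Cmult (RtoC (INR j)) (cpow (RtoC 1) (pred j))))).
  intros j _. apply Cderive_mult. apply Cderive_const. apply Cderive_pow.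
  rewrite Cplus_0_l.
  apply sum_n_m_ext. intros j. rewrite !cpow_1. Cring.
Qed.

Lemma dOmap n k An Bn alpha :
  Oden k An Bn alpha (RtoC 1) <> RtoC 0 ->
  let N1 := Onum k An Bn alpha (RtoC 1) in
  let D1 := Oden k An Bn alpha (RtoC 1) in
  let dN := Cplus (RtoC (INR k)) (sum_n_m (G := C_AbelianMonoid)
       (fun j => Cmult (acoef An Bn alpha j) (RtoC (INR (k - j)))) 1 k) in
  let dD := sum_n_m (G := C_AbelianMonoid)
       (fun j => Cmult (acoef An Bn alpha j) (RtoC (INR j))) 1 k in
  is_derive (K := C_AbsRing) (V := C_NormedModule) (Omap n k An Bn alpha) (RtoC 1)
    (Cplus (Cmult (Cmult (RtoC (INR n)) (cpow (RtoC 1) (pred n))) (Cdiv N1 D1))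
       (Cmult (cpow (RtoC 1) n)
          (Cplus (Cmult dN (Cinv D1)) (Cmult N1 (Cmult dD (Copp (Cinv (Cmult D1 D1)))))))).
Proof.
  intros HD N1 D1 dN dD.
  change (is_derive (K := C_AbsRing) (V := C_NormedModule) (fun z => Cmult (cpow z n) (Cmult (Onum k An Bn alpha z) (Cinv (Oden k An Bn alpha z)))) (RtoC 1)
    (Cplus (Cmult (Cmult (RtoC (INR n)) (cpow (RtoC 1) (pred n))) (Cdiv N1 D1))
       (Cmult (cpow (RtoC 1) n)
          (Cplus (Cmult dN (Cinv D1)) (Cmult N1 (Cmult dD (Copp (Cinv (Cmult D1 D1))))))))).
  eapply is_derive_eqC.
  apply Cderive_mult. apply Cderive_pow.
  apply Cderive_mult. apply dnum.
  apply (is_derive_comp (K:=C_AbsRing) (V:=C_NormedModule) (fun z => Cinv z) (Oden k An Bn alpha)).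
  apply Cderive_inv; auto. apply derC_to_abs, dden.
  reflexivity.
Qed.

Lemma sumC_lin (f g : nat -> R) (alpha : C) k :
  sum_n_m (G := C_AbelianMonoid) (fun j => Cplus (RtoC (f j)) (Cmult (RtoC (g j)) alpha)) 1 k
  = Cplus (RtoC (sum_n_m (G := R_AbelianMonoid) f 1 k))
          (Cmult (RtoC (sum_n_m (G := R_AbelianMonoid) g 1 k)) alpha).
Proof.
  induction k as [|k IH].
  - rewrite !sum1_0. destruct alpha as [x y].
    apply injective_projections; simpl; unfold zero; simpl; ring.
  - rewrite !sum1_S, IH. destruct alpha as [x y].
    apply injective_projections; simpl; unfold plus; simpl; ring.
Qed.

Lemma sumR_lin (f : nat -> R) (n K : nat) m : (m <= K)%nat ->
  sum_n_m (G := R_AbelianMonoid) (fun j => (INR n + INR K - 2 * INR j) * f j) 1 m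
  = INR n * sum_n_m (G := R_AbelianMonoid) f 1 m
    + sum_n_m (G := R_AbelianMonoid) (fun j => f j * INR (K - j)) 1 m
    - sum_n_m (G := R_AbelianMonoid) (fun j => f j * INR j) 1 m.
Proof.
  induction m as [|m IH]; intros Hm.
  - rewrite !sum1_0. unfold zero; simpl; ring.
  - rewrite !sum1_S, IH by lia. rewrite minus_INR by lia. unfold plus; simpl; ring.
Qed.

Lemma key n k An Bn alpha : admissible k An Bn alpha ->
  let S := Cplus (RtoC (A'cst k An)) (Cmult (RtoC (B'cst k Bn)) alpha) in
  Omap n k An Bn alpha (RtoC 1) = RtoC 1 /\ S <> RtoC 0 /\
  exists L, is_multiplier (Omap n k An Bn alpha) (RtoC 1) L /\
    Cmult L S = Cplus (RtoC (Acst n k An)) (Cmult (RtoC (Bcst n k Bn)) alpha).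
Proof.
  intros [_ Hs] S.
  assert (HS : Cplus (RtoC 1) (sum_n_m (G := C_AbelianMonoid) (fun j => acoef An Bn alpha j) 1 k) = S).
  { unfold acoef. rewrite sumC_lin. unfold S, A'cst, B'cst. destruct alpha as [x y].
    apply injective_projections; simpl; ring. }
  assert (HN : Onum k An Bn alpha (RtoC 1) = Cplus (RtoC 1) (sum_n_m (G := C_AbelianMonoid) (fun j => acoef An Bn alpha j) 1 k)).
  { unfold Onum. rewrite cpow_1. f_equal. apply sum_n_m_ext. intros j. rewrite cpow_1. Cring. }
  assert (HD : Oden k An Bn alpha (RtoC 1) = Cplus (RtoC 1) (sum_n_m (G := C_AbelianMonoid) (fun j => acoef An Bn alpha j) 1 k)).
  { unfold Oden. f_equal. apply sum_n_m_ext. intros j. rewrite cpow_1. Cring. }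
  rewrite HS in HN, HD, Hs.
  split; [|split; [exact Hs|]].
  { unfold Omap. rewrite HN, HD, cpow_1. field. exact Hs. }
  assert (HD0 : Oden k An Bn alpha (RtoC 1) <> RtoC 0) by (rewrite HD; exact Hs).
  pose proof (dOmap n k An Bn alpha HD0) as Hd. cbv zeta in Hd.
  eexists; split; [exact Hd|].
  rewrite HN, HD, !cpow_1.
  assert (E1 : sum_n_m (G := C_AbelianMonoid) (fun j => Cmult (acoef An Bn alpha j) (RtoC (INR (k - j)))) 1 k
     = Cplus (RtoC (sum_n_m (G := R_AbelianMonoid) (fun j => An j * INR (k - j)) 1 k))
          (Cmult (RtoC (sum_n_m (G := R_AbelianMonoid) (fun j => Bn j * INR (k - j)) 1 k)) alpha)).
  { rewrite <- sumC_lin. apply sum_n_m_ext. intros j. unfold acoef. destruct alpha as [x y]. apply injective_projections; simpl; ring. }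
  assert (E2 : sum_n_m (G := C_AbelianMonoid) (fun j => Cmult (acoef An Bn alpha j) (RtoC (INR j))) 1 k
     = Cplus (RtoC (sum_n_m (G := R_AbelianMonoid) (fun j => An j * INR j) 1 k))
          (Cmult (RtoC (sum_n_m (G := R_AbelianMonoid) (fun j => Bn j * INR j) 1 k)) alpha)).
  { rewrite <- sumC_lin. apply sum_n_m_ext. intros j. unfold acoef. destruct alpha as [x y]. apply injective_projections; simpl; ring. }
  rewrite E1, E2.
  match goal with |- Cmult (Cplus _ (Cmult _ (Cplus (Cmult ?dN _) (Cmult _ (Cmult ?dD _))))) _ = _ =>
    transitivity (Cplus (Cmult (RtoC (INR n)) S) (Cminus dN dD)); [field; exact Hs|] end.
  unfold Acst, Bcst. rewrite !(sumR_lin _ n k k) by lia.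
  unfold S, A'cst, B'cst. destruct alpha as [x y].
  apply injective_projections; simpl; ring.
Qed.

Lemma Cmod_pair (a b : R) (z : C) : fst z = a -> snd z = b -> Cmod z = sqrt (a ^ 2 + b ^ 2).
Proof. intros <- <-. reflexivity. Qed.

Lemma facts n k An Bn alpha : admissible k An Bn alpha ->
  let A := Acst n k An in let B := Bcst n k Bn in
  let A' := A'cst k An in let B' := B'cst k Bn in
  let x := fst alpha in let y := snd alpha in
  let P := ((A + B * x) ^ 2 + (B * y) ^ 2) - ((A' + B' * x) ^ 2 + (B' * y) ^ 2) in
  fixed_point (Omap n k An Bn alpha) (RtoC 1) /\
  (P < 0 -> attracting (Omap n k An Bn alpha) (RtoC 1)) /\
  (P = 0 -> indifferent (Omap n k An Bn alpha) (RtoC 1)) /\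
  (P > 0 -> repelling (Omap n k An Bn alpha) (RtoC 1)).
Proof.
  intros Hadm A B A' B' x y P.
  destruct (key n k An Bn alpha Hadm) as [Hfix [Hs [L [HL Heq]]]].
  fold A B A' B' in Hs, Heq.
  apply Cmod_gt_0 in Hs.
  apply (f_equal Cmod) in Heq. rewrite Cmod_mult in Heq.
  rewrite (Cmod_pair (A + B * x) (B * y) (Cplus (RtoC A) (Cmult (RtoC B) alpha))) in Heq
    by (unfold x, y; destruct alpha; simpl; ring).
  rewrite (Cmod_pair (A' + B' * x) (B' * y) (Cplus (RtoC A') (Cmult (RtoC B') alpha))) in Heq, Hs
    by (unfold x, y; destruct alpha; simpl; ring).
  assert (HN0 : 0 <= (A + B * x) ^ 2 + (B * y) ^ 2) by (apply Rplus_le_le_0_compat; apply pow2_ge_0).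
  assert (HS0 : 0 <= (A' + B' * x) ^ 2 + (B' * y) ^ 2) by (apply Rplus_le_le_0_compat; apply pow2_ge_0).
  assert (HL0 : 0 <= Cmod L) by apply Cmod_ge_0.
  split; [exact Hfix|].
  split; [|split].
  - intros HP. split; [exact Hfix|]. exists L. split; [exact HL|].
    assert (sqrt ((A + B * x) ^ 2 + (B * y) ^ 2) < sqrt ((A' + B' * x) ^ 2 + (B' * y) ^ 2))
      by (apply sqrt_lt_1_alt; unfold P in HP; lra).
    apply (Rmult_lt_reg_r (sqrt ((A' + B' * x) ^ 2 + (B' * y) ^ 2))); lra.
  - intros HP. split; [exact Hfix|]. exists L. split; [exact HL|].
    assert (E : sqrt ((A + B * x) ^ 2 + (B * y) ^ 2) = sqrt ((A' + B' * x) ^ 2 + (B' * y) ^ 2))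
      by (f_equal; unfold P in HP; lra).
    rewrite E in Heq.
    apply (Rmult_eq_reg_r (sqrt ((A' + B' * x) ^ 2 + (B' * y) ^ 2))); lra.
  - intros HP. split; [exact Hfix|]. exists L. split; [exact HL|].
    assert (sqrt ((A' + B' * x) ^ 2 + (B' * y) ^ 2) < sqrt ((A + B * x) ^ 2 + (B * y) ^ 2))
      by (apply sqrt_lt_1_alt; unfold P in HP; lra).
    unfold Rgt. apply (Rmult_lt_reg_r (sqrt ((A' + B' * x) ^ 2 + (B' * y) ^ 2))); lra.
Qed.

Lemma case1 A B A' B' x y :
  let D := B ^ 2 - B' ^ 2 in
  let c := (A * B - A' * B') / D in
  let r := (A' * B - A * B') / D in
  let P := ((A + B * x) ^ 2 + (B * y) ^ 2) - ((A' + B' * x) ^ 2 + (B' * y) ^ 2) in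
  let m := sqrt ((x + c) ^ 2 + y ^ 2) in
  D <> 0 ->
  (m = Rabs r -> P = 0) /\
  (m < Rabs r -> (D > 0 -> P < 0) /\ (D < 0 -> P > 0)) /\
  (m > Rabs r -> (D > 0 -> P > 0) /\ (D < 0 -> P < 0)).
Proof.
  intros D c r P m HD.
  assert (EP : P = D * (((x + c) ^ 2 + y ^ 2) - r ^ 2)).
  { unfold P, c, r, D in *. field. exact HD. }
  assert (Hm2 : m * m = (x + c) ^ 2 + y ^ 2).
  { unfold m. apply sqrt_sqrt. apply Rplus_le_le_0_compat; apply pow2_ge_0. }
  assert (Hr2 : Rabs r * Rabs r = r ^ 2).
  { rewrite <- Rabs_mult. rewrite Rabs_right. ring. nra. }
  assert (Hm0 : 0 <= m) by apply sqrt_pos.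
  assert (Hr0 : 0 <= Rabs r) by apply Rabs_pos.
  split; [|split].
  - intros E. rewrite EP. rewrite <- Hm2, <- Hr2, E. ring.
  - intros Hlt. assert (Q : (x + c) ^ 2 + y ^ 2 - r ^ 2 < 0) by nra.
    split; intros; rewrite EP; nra.
  - intros Hlt. assert (Q : (x + c) ^ 2 + y ^ 2 - r ^ 2 > 0) by nra.
    split; intros; rewrite EP; nra.
Qed.

Lemma case2a A B A' x y : B <> 0 ->
  let P := ((A + B * x) ^ 2 + (B * y) ^ 2) - ((A' + B * x) ^ 2 + (B * y) ^ 2) in
  (A = A' -> P = 0) /\
  ((x < - (A + A') / (2 * B) /\ B * (A - A') > 0) \/
   (x > - (A + A') / (2 * B) /\ B * (A - A') < 0) -> P < 0) /\
  ((x > - (A + A') / (2 * B) /\ B * (A - A') > 0) \/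
   (x < - (A + A') / (2 * B) /\ B * (A - A') < 0) -> P > 0).
Proof.
  intros HB P.
  set (t := - (A + A') / (2 * B)).
  assert (E1 : B * (2 * B * x + A + A') = 2 * B ^ 2 * (x - t)) by (unfold t; field; exact HB).
  assert (E2 : B ^ 2 * P = (B * (A - A')) * (B * (2 * B * x + A + A'))) by (unfold P; ring).
  assert (HB2 : B ^ 2 > 0) by (apply pow2_gt_0; exact HB).
  split; [|split].
  - intros ->. unfold P. ring.
  - intros [[H1 H2]|[H1 H2]].
    + assert (Q1 : 2 * B ^ 2 * (x - t) < 0) by nra.
      assert (Q : B ^ 2 * P < 0) by (rewrite E2, E1; nra). nra.
    + assert (Q1 : 2 * B ^ 2 * (x - t) > 0) by nra.
      assert (Q : B ^ 2 * P < 0) by (rewrite E2, E1; nra). nra.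
  - intros [[H1 H2]|[H1 H2]].
    + assert (Q1 : 2 * B ^ 2 * (x - t) > 0) by nra.
      assert (Q : B ^ 2 * P > 0) by (rewrite E2, E1; nra). nra.
    + assert (Q1 : 2 * B ^ 2 * (x - t) < 0) by nra.
      assert (Q : B ^ 2 * P > 0) by (rewrite E2, E1; nra). nra.
Qed.

Lemma case2b A B A' x y : B <> 0 ->
  let P := ((A + B * x) ^ 2 + (B * y) ^ 2) - ((A' + (- B) * x) ^ 2 + ((- B) * y) ^ 2) in
  (A = - A' -> P = 0) /\
  ((x < (A' - A) / (2 * B) /\ B * (A + A') > 0) \/
   (x > (A' - A) / (2 * B) /\ B * (A + A') < 0) -> P < 0) /\
  ((x > (A' - A) / (2 * B) /\ B * (A + A') > 0) \/
   (x < (A' - A) / (2 * B) /\ B * (A + A') < 0) -> P > 0).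
Proof.
  intros HB P.
  set (t := (A' - A) / (2 * B)).
  assert (E1 : B * (2 * B * x + A - A') = 2 * B ^ 2 * (x - t)) by (unfold t; field; exact HB).
  assert (E2 : B ^ 2 * P = (B * (A + A')) * (B * (2 * B * x + A - A'))) by (unfold P; ring).
  assert (HB2 : B ^ 2 > 0) by (apply pow2_gt_0; exact HB).
  split; [|split].
  - intros ->. unfold P. ring.
  - intros [[H1 H2]|[H1 H2]].
    + assert (Q1 : 2 * B ^ 2 * (x - t) < 0) by nra.
      assert (Q : B ^ 2 * P < 0) by (rewrite E2, E1; nra). nra.
    + assert (Q1 : 2 * B ^ 2 * (x - t) > 0) by nra.
      assert (Q : B ^ 2 * P < 0) by (rewrite E2, E1; nra). nra.
  - intros [[H1 H2]|[H1 H2]].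
    + assert (Q1 : 2 * B ^ 2 * (x - t) > 0) by nra.
      assert (Q : B ^ 2 * P > 0) by (rewrite E2, E1; nra). nra.
    + assert (Q1 : 2 * B ^ 2 * (x - t) < 0) by nra.
      assert (Q : B ^ 2 * P > 0) by (rewrite E2, E1; nra). nra.
Qed.

Lemma case2c A A' x y :
  let P := ((A + 0 * x) ^ 2 + (0 * y) ^ 2) - ((A' + 0 * x) ^ 2 + (0 * y) ^ 2) in
  (Rabs A = Rabs A' -> P = 0) /\ (Rabs A < Rabs A' -> P < 0) /\ (Rabs A > Rabs A' -> P > 0).
Proof.
  intros P.
  assert (EP : P = Rabs A * Rabs A - Rabs A' * Rabs A').
  { unfold P. rewrite <- !Rabs_mult, !Rabs_right by nra. ring. }
  pose proof (Rabs_pos A). pose proof (Rabs_pos A').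
  split; [|split]; intros Hc; rewrite EP.
  - rewrite Hc; ring.
  - nra.
  - nra.
Qed.

Theorem proposition3p5 (n k : nat) (An Bn : nat -> R) :
  (1 <= n)%nat -> (1 <= k)%nat ->
  let A := Acst n k An in
  let B := Bcst n k Bn in
  let A' := A'cst k An in
  let B' := B'cst k Bn in
  let D := B ^ 2 - B' ^ 2 in
  let c := (A * B - A' * B') / D in
  let r := (A' * B - A * B') / D in
  let O := Omap n k An Bn in
  let adm := admissible k An Bn in
  (* z = 1 is a fixed point *)
  (forall alpha, adm alpha -> O alpha (RtoC 1) = RtoC 1) /\
  (* case 1 : B^2 - B'^2 <> 0 *)
  (D <> 0 -> forall alpha, adm alpha ->
     (Cmod (Cplus alpha (RtoC c)) = Rabs r -> indifferent (O alpha) (RtoC 1)) /\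
     (Cmod (Cplus alpha (RtoC c)) < Rabs r ->
        (D > 0 -> attracting (O alpha) (RtoC 1)) /\
        (D < 0 -> repelling (O alpha) (RtoC 1))) /\
     (Cmod (Cplus alpha (RtoC c)) > Rabs r ->
        (D > 0 -> repelling (O alpha) (RtoC 1)) /\
        (D < 0 -> attracting (O alpha) (RtoC 1)))) /\
  (* case 2(a) : B = B' <> 0 *)
  (B = B' -> B <> 0 -> forall alpha, adm alpha ->
     (A = A' -> indifferent (O alpha) (RtoC 1)) /\
     ((Re alpha < - (A + A') / (2 * B) /\ B * (A - A') > 0) \/
      (Re alpha > - (A + A') / (2 * B) /\ B * (A - A') < 0) ->
        attracting (O alpha) (RtoC 1)) /\
     ((Re alpha > - (A + A') / (2 * B) /\ B * (A - A') > 0) \/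
      (Re alpha < - (A + A') / (2 * B) /\ B * (A - A') < 0) ->
        repelling (O alpha) (RtoC 1))) /\
  (* case 2(b) : B = -B' <> 0 *)
  (B = - B' -> B <> 0 -> forall alpha, adm alpha ->
     (A = - A' -> indifferent (O alpha) (RtoC 1)) /\
     ((Re alpha < (A' - A) / (2 * B) /\ B * (A + A') > 0) \/
      (Re alpha > (A' - A) / (2 * B) /\ B * (A + A') < 0) ->
        attracting (O alpha) (RtoC 1)) /\
     ((Re alpha > (A' - A) / (2 * B) /\ B * (A + A') > 0) \/
      (Re alpha < (A' - A) / (2 * B) /\ B * (A + A') < 0) ->
        repelling (O alpha) (RtoC 1))) /\
  (* case 2(c) : B = B' = 0 *)
  (B = 0 -> B' = 0 -> forall alpha, adm alpha ->
     (Rabs A = Rabs A' -> indifferent (O alpha) (RtoC 1)) /\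
     (Rabs A < Rabs A' -> attracting (O alpha) (RtoC 1)) /\
     (Rabs A > Rabs A' -> repelling (O alpha) (RtoC 1))) /\
  (* superattracting at alpha = -A/B *)
  (B <> 0 -> adm (RtoC (- A / B)) -> superattracting (O (RtoC (- A / B))) (RtoC 1)).
Proof.
  intros Hn Hk. cbv zeta.
  split; [|split; [|split; [|split; [|split]]]].
  - intros alpha Ha. exact (proj1 (key n k An Bn alpha Ha)).
  - intros HD [x y] Ha.
    pose proof (facts n k An Bn (x, y) Ha) as F. cbv zeta in F. cbn [fst snd] in F.
    destruct F as [_ [Fat [Fin Frep]]].
    pose proof (case1 (Acst n k An) (Bcst n k Bn) (A'cst k An) (B'cst k Bn) x y) as C1.
    cbv zeta in C1. specialize (C1 HD). destruct C1 as [C1 [C2 C3]].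
    rewrite (Cmod_pair (x + (Acst n k An * Bcst n k Bn - A'cst k An * B'cst k Bn) /
         (Bcst n k Bn ^ 2 - B'cst k Bn ^ 2)) y) by (simpl; ring).
    split; [|split].
    + intros E. apply Fin, C1, E.
    + intros E. destruct (C2 E) as [G1 G2]. split; intros; [apply Fat, G1 | apply Frep, G2]; auto.
    + intros E. destruct (C3 E) as [G1 G2]. split; intros; [apply Frep, G1 | apply Fat, G2]; auto.
  - intros HBB HB [x y] Ha.
    pose proof (facts n k An Bn (x, y) Ha) as F. cbv zeta in F. cbn [fst snd] in F.
    destruct F as [_ [Fat [Fin Frep]]].
    rewrite <- HBB in Fat, Fin, Frep.
    pose proof (case2a (Acst n k An) (Bcst n k Bn) (A'cst k An) x y HB) as C1.
    cbv zeta in C1. destruct C1 as [C1 [C2 C3]].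
    unfold Re; cbn [fst].
    split; [|split]; intros E; [apply Fin, C1, E | apply Fat, C2, E | apply Frep, C3, E].
  - intros HBB HB [x y] Ha.
    pose proof (facts n k An Bn (x, y) Ha) as F. cbv zeta in F. cbn [fst snd] in F.
    destruct F as [_ [Fat [Fin Frep]]].
    assert (HB' : B'cst k Bn = - Bcst n k Bn) by lra.
    rewrite HB' in Fat, Fin, Frep.
    pose proof (case2b (Acst n k An) (Bcst n k Bn) (A'cst k An) x y HB) as C1.
    cbv zeta in C1. destruct C1 as [C1 [C2 C3]].
    unfold Re; cbn [fst].
    split; [|split]; intros E; [apply Fin, C1, E | apply Fat, C2, E | apply Frep, C3, E].
  - intros HB HB' [x y] Ha.
    pose proof (facts n k An Bn (x, y) Ha) as F. cbv zeta in F. cbn [fst snd] in F.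
    destruct F as [_ [Fat [Fin Frep]]].
    rewrite HB, HB' in Fat, Fin, Frep.
    pose proof (case2c (Acst n k An) (A'cst k An) x y) as C1.
    cbv zeta in C1. destruct C1 as [C1 [C2 C3]].
    split; [|split]; intros E; [apply Fin, C1, E | apply Fat, C2, E | apply Frep, C3, E].
  - intros HB Ha.
    destruct (key n k An Bn _ Ha) as [Hfix [Hs [L [HL Heq]]]].
    split; [exact Hfix|].
    assert (HL0 : L = RtoC 0).
    { assert (Z : Cplus (RtoC (Acst n k An)) (Cmult (RtoC (Bcst n k Bn)) (RtoC (- Acst n k An / Bcst n k Bn))) = RtoC 0).
      { apply injective_projections; simpl; field; exact HB. }
      rewrite Z in Heq.
      apply (f_equal (fun z => Cmult z (Cinv (Cplus (RtoC (A'cst k An)) (Cmult (RtoC (B'cst k Bn)) (RtoC (- Acst n k An / Bcst n k Bn))))))) in Heq.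
      rewrite <- Cmult_assoc, Cinv_r, Cmult_1_r, Cmult_0_l in Heq by exact Hs.
      exact Heq. }
    rewrite <- HL0. exact HL.
Qed.
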